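(* Let $1\le d<\omega$, $2\le k<\omega$, and let $P$ be a $d$-dimensional $k$-template. Then $\chi(L(\mathbb R^d,P))^{+(d-1)}\ge 2^{\aleph_0}$.
   Context: A $d$-dimensional $k$-template is a set $P$ of $d$-tuples with $|P|=k$. If $P,Q$ are $d$-dimensional templates, $Q$ is a homomorphic image of $P$ if there is a surjection $f:P\to Q$ such that for all $x,y\in P$ and $i<d$, $x_i=y_i$ implies $f(x)_i=f(y)_i$. $L(\mathbb R^d,P)$ is the $k$-hypergraph with vertex set $\mathbb R^d$ whose edges are the $k$-templates $Q\subseteq\mathbb R^d$ that are homomorphic images of $P$. $\chi$ is the chromatic number (least cardinal number of colors in a vertex coloring not constant on any edge). $\kappa^+$ is the successor cardinal, $\kappa^{+0}=\kappa$, $\kappa^{+(n+1)}=(\kappa^{+n})^+$. *)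

(* Defs.v *)
From mathcomp Require Import all_boot.
From Stdlib Require Import Reals.

Set Implicit Arguments.
Unset Strict Implicit.
Unset Printing Implicit Defensive.

Definition has_card_ord (X : Type) (A : X -> Prop) (k : nat) : Prop :=
  exists g : 'I_k -> X, injective g /\ (forall x, A x <-> exists i, g i = x).

Definition template (d k : nat) (T : Type) (P : ('I_d -> T) -> Prop) : Prop :=
  has_card_ord P k.

Definition hom_image (d : nat) (T U : Type)
  (P : ('I_d -> T) -> Prop) (Q : ('I_d -> U) -> Prop) : Prop :=
  exists f : ('I_d -> T) -> ('I_d -> U),
    (forall x, P x -> Q (f x)) /\
    (forall y, Q y -> exists x, P x /\ f x = y) /\
    (forall x y, P x -> P y -> forall i : 'I_d, x i = y i -> f x i = f y i).

Definition L_edge (d k : nat) (T : Type) (P : ('I_d -> T) -> Prop)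
  (Q : ('I_d -> R) -> Prop) : Prop :=
  has_card_ord Q k /\ hom_image P Q.

Definition proper_coloring (d k : nat) (T : Type) (P : ('I_d -> T) -> Prop)
  (C : Type) (c : ('I_d -> R) -> C) : Prop :=
  forall Q, L_edge k P Q -> exists x y, Q x /\ Q y /\ c x <> c y.

(* The cardinality of the type K is the chromatic number of L(R^d,P):
   some proper colouring uses colour set K, and K injects into the colour
   set of every proper colouring. *)
Definition is_chromatic_number (d k : nat) (T : Type)
  (P : ('I_d -> T) -> Prop) (K : Type) : Prop :=
  (exists c : ('I_d -> R) -> K, proper_coloring k P c) /\
  (forall (C : Type) (c : ('I_d -> R) -> C), proper_coloring k P c ->
     exists h : K -> C, injective h).

Definition strict_wellorder (X : Type) (A : X -> Prop) (lt : X -> X -> Prop)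
  : Prop :=
  (forall x, ~ lt x x) /\
  (forall x y z, lt x y -> lt y z -> lt x z) /\
  (forall x y, A x -> A y -> x = y \/ lt x y \/ lt y x) /\
  (forall B : X -> Prop, (forall x, B x -> A x) -> (exists x, B x) ->
     exists m, B m /\ forall y, B y -> ~ lt y m).

(* card_le_succ n A K  <->  |A| <= |K|^{+n}.
   n = 0: A injects into K.
   n+1: |A| <= kappa^{+(n+1)} iff A carries a well-order all of whose
   proper initial segments have cardinality <= kappa^{+n}. *)
Fixpoint card_le_succ (n : nat) (X : Type) (A : X -> Prop) (K : Type)
  {struct n} : Prop :=
  match n with
  | 0 => exists f : X -> K, forall x y, A x -> A y -> f x = f y -> x = y
  | n'.+1 => exists lt : X -> X -> Prop, strict_wellorder A lt /\
      forall a, A a -> card_le_succ n' (fun x => A x /\ lt x a) K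
  end.

(* Main.v *)
Require Import Defs.
From mathcomp Require Import all_boot.
From Stdlib Require Import Reals.
From mathcomp Require Import boolp wochoice.
From mathcomp Require Import zify.
From mathcomp Require classical_sets.

Set Implicit Arguments.
Unset Strict Implicit.
Unset Printing Implicit Defensive.


Lemma wo_exists (X : Type) : exists lt : X -> X -> Prop,
  strict_wellorder (fun _ => True) lt.
Proof.
have [R wR] := well_ordering_principle {classic X}.
have ne2 (x y : {classic X}) : nonempty (mem [:: x; y]).
  by exists x; rewrite inE eqxx.
have Rrefl : forall x : {classic X}, R x x.
  move=> x; have [z [[zin zlb] _]] := wR (mem [:: x]) (ex_intro _ x (mem_head _ _)).
  move: zin; rewrite inE => /eqP ez; subst z; exact: zlb (mem_head _ _).
have Ranti : forall x y : {classic X}, R x y -> R y x -> x = y.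
  move=> x y Rxy Ryx.
  have [z [[zin zlb] zu]] := wR _ (ne2 x y).
  have hx : minimum_of R (mem [:: x; y]) x.
    split; first by rewrite inE eqxx.
    by move=> w; rewrite !inE => /orP[/eqP->|/eqP->].
  have hy : minimum_of R (mem [:: x; y]) y.
    split; first by rewrite !inE eqxx orbT.
    by move=> w; rewrite !inE => /orP[/eqP->|/eqP->].
  by rewrite -(zu _ hx) -(zu _ hy).
have Rtot : forall x y : {classic X}, R x y \/ R y x.
  move=> x y; have [z [[zin zlb] _]] := wR _ (ne2 x y).
  move: zin; rewrite !inE => /orP[/eqP ez|/eqP ez]; subst z.
  - by left; apply: zlb; rewrite !inE eqxx orbT.
  - by right; apply: zlb; rewrite !inE eqxx.
have Rtrans : forall x y z : {classic X}, R x y -> R y z -> R x z.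
  move=> x y z Rxy Ryz.
  have ne3 : nonempty (mem [:: x; y; z]) by exists x; rewrite inE eqxx.
  have [w [[win wlb] _]] := wR _ ne3.
  move: win; rewrite !inE => /or3P[/eqP ew|/eqP ew|/eqP ew]; subst w.
  - by apply: wlb; rewrite !inE eqxx !orbT.
  - have Ryx : R y x by apply: wlb; rewrite !inE eqxx.
    by rewrite (Ranti _ _ Rxy Ryx).
  - have Rzy : R z y by apply: wlb; rewrite !inE eqxx !orbT.
    by rewrite -(Ranti _ _ Ryz Rzy).
exists (fun x y : X => R x y /\ x <> y); split; [|split; [|split]].
- by move=> x [_ H].
- move=> x y z [Rxy nxy] [Ryz nyz]; split; first exact: Rtrans Rxy Ryz.
  by move=> exz; subst z; apply: nxy; apply: Ranti.
- move=> x y _ _; case: (pselect (x = y)) => [->|nxy]; first by left.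
  by right; case: (Rtot x y) => H; [left|right]; split => // eyx; apply: nxy.
- move=> B _ [x Bx].
  have neB : nonempty (mem (fun x : {classic X} => `[< B x >])).
    by exists x; apply/asboolP.
  have [m [[min mlb] _]] := wR _ neB.
  exists m; split; first by move: min => /asboolP.
  move=> y By [Rym nym]; apply: nym; apply: Ranti => //.
  by apply: mlb; apply/asboolP.
Qed.



Lemma wo_rank (X Y : Type) (A : X -> Prop) (B : Y -> Prop) (r : X -> Y)
  (ltY : Y -> Y -> Prop) (ltX : X -> X -> Prop) :
  strict_wellorder B ltY -> strict_wellorder (fun _ => True) ltX ->
  (forall x, A x -> B (r x)) ->
  strict_wellorder A (fun x x' => ltY (r x) (r x') \/ (r x = r x' /\ ltX x x')).
Proof.
move=> [irY [trY [toY miY]]] [irX [trX [toX miX]]] AB; split; [|split; [|split]].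
- by move=> x [/irY|[_ /irX]].
- move=> x y z [h1|[e1 h1]] [h2|[e2 h2]].
  + by left; apply: trY h1 h2.
  + by left; rewrite -e2.
  + by left; rewrite e1.
  + by right; split; [rewrite e1 e2|apply: trX h1 h2].
- move=> x y Ax Ay.
  case: (toY _ _ (AB _ Ax) (AB _ Ay)) => [e|[h|h]]; last 2 first.
  + by right; left; left.
  + by right; right; left.
  case: (toX x y I I) => [->|[h|h]]; first by left.
  + by right; left; right.
  + by right; right; right.
- move=> C CA [x Cx].
  have sub : forall y, (exists x, C x /\ r x = y) -> B y.
    by move=> y [x0 [Cx0 <-]]; apply: AB; apply: CA.
  have [m' [[x' [Cx' ex']] mm']] :=
    miY (fun y => exists x, C x /\ r x = y) sub
        (ex_intro _ _ (ex_intro _ x (conj Cx erefl))).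
  have [m [[Cm em] mm]] := miX (fun x => C x /\ r x = m') (fun _ _ => I)
    (ex_intro _ x' (conj Cx' ex')).
  exists m; split => // y Cy [h|[e h]].
  + by apply: (mm' (r y)) => //; [exists y | rewrite -em].
  + by apply: (mm y) => //; split => //; rewrite e.
Qed.

Lemma wo_restrict (X : Type) (A : X -> Prop) lt :
  strict_wellorder (fun _ => True) lt -> strict_wellorder A lt.
Proof.
move=> [ir [tr [to mi]]]; split => //; split => //; split.
- by move=> x y _ _; apply: to.
- by move=> B _; apply: mi.
Qed.

Definition injon (X Y : Type) (A : X -> Prop) (f : X -> Y) :=
  forall x y, A x -> A y -> f x = f y -> x = y.

Lemma lev_pull (K : Type) m : forall (X Y : Type) (A : X -> Prop) (B : Y -> Prop)
  (f : X -> Y), (forall x, A x -> B (f x)) -> injon A f ->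
  card_le_succ m B K -> card_le_succ m A K.
Proof.
elim: m => [|m IH] X Y A B f AB inj /=.
  move=> [g gi]; exists (fun x => g (f x)) => x y Ax Ay e.
  by apply: inj => //; apply: gi => //; apply: AB.
move=> [ltB [woB segB]].
have [ltX woX] := wo_exists X.
exists (fun x x' => ltB (f x) (f x') \/ (f x = f x' /\ ltX x x')); split.
  exact: wo_rank woB woX AB.
move=> a Aa; apply: (IH _ _ _ _ f _ _ (segB _ (AB _ Aa))).
- move=> x [Ax [h|[e h]]]; first by split => //; apply: AB.
  have exa := inj _ _ Ax Aa e; subst x.
  by case: woX => ir _; case: (ir _ h).
- by move=> x y [Ax _] [Ay _]; apply: inj.
Qed.

Lemma lev_sub (K X : Type) m (A B : X -> Prop) :
  (forall x, A x -> B x) -> card_le_succ m B K -> card_le_succ m A K.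
Proof.
move=> AB h; exact (@lev_pull K m X X A B (fun x => x) AB (fun x y _ _ e => e) h).
Qed.

Lemma lev_raise (K X : Type) m (A : X -> Prop) :
  card_le_succ m A K -> card_le_succ m.+1 A K.
Proof.
move=> h; have [lt wo] := wo_exists X; exists lt; split.
  exact: wo_restrict.
by move=> a _; apply: lev_sub h => x [].
Qed.

Lemma lev_le (K X : Type) m m' (A : X -> Prop) :
  m <= m' -> card_le_succ m A K -> card_le_succ m' A K.
Proof.
elim: m' => [|m' IH]; first by rewrite leqn0 => /eqP ->.
rewrite leq_eqVlt => /orP[/eqP -> //|lt] h.
by apply: lev_raise; apply: IH.
Qed.

Lemma lev_empty (K X : Type) m (A : X -> Prop) :
  (forall x, ~ A x) -> inhabited K -> card_le_succ m A K.
Proof.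
move=> nA [k0]; apply: (lev_le (m := 0)) => //.
by exists (fun _ => k0) => x y Ax; case: (nA _ Ax).
Qed.

Definition bigK (K : Type) :=
  (exists h : K * K -> K, injective h) /\ (exists e : nat -> K, injective e).

Lemma nob_inj : injective nat_of_bool.
Proof. by case; case. Qed.

Definition prod_stmt (K : Type) m := forall (X Z : Type) (A : X -> Prop) (Zs : Z -> Prop),
  (exists fz : Z -> K, injon Zs fz) -> card_le_succ m A K ->
  card_le_succ m (fun p : X * Z => A p.1 /\ Zs p.2) K.

Lemma addpoint_of_prod (K : Type) m : bigK K -> prod_stmt K m ->
  forall (X : Type) (A : X -> Prop) (a : X),
  card_le_succ m A K -> card_le_succ m (fun x => A x \/ x = a) K.
Proof.
move=> [_ [e einj]] PS X A a LA.
case: (pselect (exists a0, A a0)) => [[a0 Aa0]|nA]; last first.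
  apply: (lev_le (m := 0)) => //; exists (fun _ => e 0) => x y.
  case=> [Ax|->]; first by case: nA; exists x.
  by case=> [Ay|->]; first by case: nA; exists y.
have fz : exists fz : bool -> K, injon (fun _ => True) fz.
  by exists (fun b : bool => e (nat_of_bool b)) => x y _ _ h; apply: nob_inj; apply: einj.
have LP := PS X bool A (fun _ => True) fz LA.
apply: (lev_pull (f := fun x => if pselect (x = a) then (a0, true) else (x, false))) LP.
- move=> x hx; destruct (pselect (x = a)) as [exa|nxa]; split => //; by case: hx.
- move=> x y _ _; destruct (pselect (x = a)) as [exa|nxa];
    destruct (pselect (y = a)) as [eya|nya]; try congruence; by case.
Qed.

Lemma lev_prod (K : Type) m : bigK K -> prod_stmt K m.
Proof.
move=> hK; elim: m => [|m IH] X Z A Zs [fz fzi] /=.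
  move=> [f fi]; case: hK => [[h hi] _].
  exists (fun p => h (f p.1, fz p.2)) => [[x1 z1] [x2 z2]] [A1 Z1] [A2 Z2] /= /hi [] e1 e2.
  by have /= -> := fi _ _ A1 A2 e1; have /= -> := fzi _ _ Z1 Z2 e2.
move=> [ltA [woA segA]].
have [ltX woX] := wo_exists (X * Z).
exists (fun p q => ltA p.1 q.1 \/ (p.1 = q.1 /\ ltX p q)); split.
  by apply: (wo_rank (r := fst)) woA woX _ => p [].
move=> q [Aq Zq].
have A'L := addpoint_of_prod hK IH q.1 (segA _ Aq).
have := IH X Z _ Zs (ex_intro _ fz fzi) A'L.
apply: lev_sub => p [[Ap Zp] [h|[e h]]]; split => //.
- by left.
- by right.
Qed.

Lemma lev_addpoint (K : Type) m (X : Type) (A : X -> Prop) (a : X) : bigK K ->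
  card_le_succ m A K -> card_le_succ m (fun x => A x \/ x = a) K.
Proof. move=> hK LA. refine (@addpoint_of_prod K m hK (lev_prod (m:=m) hK) X A a LA). Qed.

Definition FS (V : Type) (v0 : V) (k : nat) (Y : V -> Prop) : (nat -> V) -> Prop :=
  fun g => (forall j, j < k -> Y (g j)) /\ (forall j, k <= j -> g j = v0).

Lemma FS_eq (V : Type) (v0 : V) k Y g g' : FS v0 k Y g -> FS v0 k Y g' ->
  (forall j, j < k -> g j = g' j) -> g = g'.
Proof.
move=> [_ h1] [_ h2] e; apply: funext => j.
case: (ltnP j k) => [/e //|kj]; by rewrite h1 // h2.
Qed.

Fixpoint mx (V : Type) (lt : V -> V -> Prop) (i : nat) (g : nat -> V) : V :=
  match i with
  | 0 => g 0
  | i'.+1 => if pselect (lt (mx lt i' g) (g i)) then g i else mx lt i' g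
  end.

Lemma mx_spec (V : Type) (Y : V -> Prop) lt : strict_wellorder Y lt ->
  forall i g, (forall j, j <= i -> Y (g j)) ->
  Y (mx lt i g) /\ forall j, j <= i -> g j = mx lt i g \/ lt (g j) (mx lt i g).
Proof.
move=> [ir [tr [to _]]]; elim=> [|i IH] g Yg.
  split; first exact: Yg.
  by move=> j; rewrite leqn0 => /eqP ->; left.
have [Ym hm] := IH g (fun j lj => Yg j (leqW lj)).
have [[E h]|[E nh]] : (mx lt i.+1 g = g i.+1 /\ lt (mx lt i g) (g i.+1)) \/
    (mx lt i.+1 g = mx lt i g /\ ~ lt (mx lt i g) (g i.+1)).
  by rewrite /=; case: pselect => hh; [left|right].
  rewrite E; split; first exact: Yg.
  move=> j; rewrite leq_eqVlt => /orP[/eqP ->|lj]; first by left.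
  case: (hm j lj) => [->|h']; right => //; exact: tr h' h.
rewrite E; split => // j; rewrite leq_eqVlt => /orP[/eqP ->|lj]; last exact: hm.
case: (to _ _ (Yg _ (leqnn _)) Ym) => [->|[h'|h']]; [by left|by right|by case: nh].
Qed.

Fixpoint code (K V : Type) (h : K * K -> K) (f : V -> K) (k0 : K) (i : nat) (g : nat -> V) : K :=
  match i with
  | 0 => k0
  | i'.+1 => h (code h f k0 i' g, f (g i'))
  end.

Lemma code_inj (K V : Type) (h : K * K -> K) (f : V -> K) (k0 : K) (Y : V -> Prop) :
  injective h -> injon Y f -> forall i g g', (forall j, j < i -> Y (g j) /\ Y (g' j)) ->
  code h f k0 i g = code h f k0 i g' -> forall j, j < i -> g j = g' j.
Proof.
move=> hi fi; elim=> [|i IH] g g' Yg //= /hi [] ec ef j.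
rewrite ltnS leq_eqVlt => /orP[/eqP ->|lj].
  by case: (Yg i (ltnSn _)) => Y1 Y2; apply: fi.
by apply: (IH g g') => // j' lj'; apply: Yg; apply: leqW.
Qed.

Lemma lev_FS (K : Type) m : bigK K -> forall (V : Type) (v0 : V) k (Y : V -> Prop),
  card_le_succ m Y K -> card_le_succ m (FS v0 k Y) K.
Proof.
move=> hK; elim: m => [|m IH] V v0 k Y /=.
  move=> [f fi]; case: hK => [[h hi] [e ei]].
  exists (code h f (e 0) k) => g g' Fg Fg' ec; apply: (FS_eq Fg Fg').
  apply: (code_inj hi fi _ ec) => j lj; split; [exact: Fg.1|exact: Fg'.1].
move=> [ltY [woY segY]].
case: k => [|k].
  refine (@lev_le K _ 0 m.+1 (FS v0 0 Y) (leq0n _) _); case: hK => [_ [e _]].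
  exists (fun _ => e 0) => g g' Fg Fg' _; apply: (FS_eq Fg Fg') => //.
have [ltX woX] := wo_exists (nat -> V).
exists (fun g q => ltY (mx ltY k g) (mx ltY k q) \/ (mx ltY k g = mx ltY k q /\ ltX g q)).
have rY : forall g, FS v0 k.+1 Y g -> Y (mx ltY k g) /\
    forall j, j <= k -> g j = mx ltY k g \/ ltY (g j) (mx ltY k g).
  by move=> g [Fg _]; apply: (mx_spec woY) => j lj; apply: Fg.
split.
  by apply: (wo_rank (r := mx ltY k)) woY woX _ => g /rY [].
move=> q Fq; have [Yq _] := rY _ Fq.
have L' := lev_addpoint (mx ltY k q) hK (segY _ Yq).
apply: lev_sub (IH _ v0 k.+1 _ L') => g [Fg hlt]; split; last by case: Fg.
move=> j lj; have [Yg hg] := rY _ Fg; have Ygj := Fg.1 _ lj.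
case: woY => _ [tr _].
case: (hg j lj) => [egj|ltj]; case: hlt => [lr|[er _]].
- by left; split => //; rewrite egj.
- by right; rewrite egj.
- by left; split => //; apply: tr ltj lr.
- by left; split => //; rewrite -er.
Qed.

Definition kdistinct (X : Type) (F : X -> Prop) (k : nat) :=
  exists g : nat -> X, (forall j, j < k -> F (g j)) /\
    (forall i j, i < k -> j < k -> g i = g j -> i = j).

Lemma fiber_small (X : Type) k : forall (F : X -> Prop), ~ kdistinct F k ->
  exists e : X -> nat, (forall x, F x -> e x < k) /\ injon F e.
Proof.
elim: k => [|k IH] F nd.
  case: (pselect (exists x, F x)) => [[x Fx]|nF].
    by case: nd; exists (fun _ => x); split.
  by exists (fun _ => 0); split => [x Fx|x y Fx]; case: nF; exists x.
case: (pselect (exists x, F x)) => [[x0 Fx0]|nF]; last first.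
  by exists (fun _ => 0); split => [x Fx|x y Fx]; case: nF; exists x.
have nd' : ~ kdistinct (fun x => F x /\ x <> x0) k.
  move=> [g [Fg ig]]; apply: nd.
  exists (fun j => if j == k then x0 else g j); split.
    move=> j; rewrite ltnS leq_eqVlt => /orP[/eqP ->|lj]; first by rewrite eqxx.
    by rewrite (ltn_eqF lj); case: (Fg j lj).
  move=> i j; rewrite ltnS leq_eqVlt.
  case/orP=> [/eqP ->|li]; rewrite ltnS leq_eqVlt; case/orP=> [/eqP ->|lj] //.
  + rewrite eqxx (ltn_eqF lj) => e; case: (Fg j lj) => _.
    by move=> ne; case: ne.
  + rewrite eqxx (ltn_eqF li) => e; case: (Fg i li) => _.
    by move=> ne; case: ne.
  + by rewrite (ltn_eqF li) (ltn_eqF lj); apply: ig.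
have [e [eb ei]] := IH _ nd'.
exists (fun x => if pselect (x = x0) then k else e x); split.
  move=> x Fx; destruct (pselect (x = x0)) as [ex|nx]; first by [].
  by apply: leqW; apply: eb.
move=> x y Fx Fy; destruct (pselect (x = x0)) as [ex|nx];
  destruct (pselect (y = x0)) as [ey|ny].
- by move=> _; rewrite ex ey.
- by move=> /= ek; have := eb y (conj Fy ny); rewrite -ek ltnn.
- by move=> /= ek; have := eb x (conj Fx nx); rewrite ek ltnn.
- by move=> /=; apply: ei.
Qed.

Lemma lev_fin2one (K : Type) m (X Y : Type) (A : X -> Prop) (B : Y -> Prop)
  (f : X -> Y) k : bigK K -> (forall x, A x -> B (f x)) ->
  (forall y, ~ kdistinct (fun x => A x /\ f x = y) k) ->
  card_le_succ m B K -> card_le_succ m A K.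
Proof.
move=> hK AB nd LB.
pose E := fun y => proj1_sig (cid (fiber_small (nd y))).
have Eb : forall x, A x -> E (f x) x < k.
  by move=> x Ax; rewrite /E; case: cid => e [eb _] /=; apply: eb.
have Ei : forall x y, A x -> A y -> f x = f y -> E (f x) x = E (f y) y -> x = y.
  move=> x y Ax Ay fe; rewrite -fe /E; case: cid => e [_ ei] /=.
  by apply: ei.
have hz : exists fz : nat -> K, injon (fun n => n < k) fz.
  by case: hK => [_ [e ei]]; exists e => x y _ _; apply: ei.
have LP := lev_prod hK hz LB.
apply: (lev_pull (f := fun x => (f x, E (f x) x))) LP.
- by move=> x Ax; split => /=; [apply: AB|apply: Eb].
- by move=> x y Ax Ay [e1 e2]; apply: Ei.
Qed.



Definition pt (U : Type) (u0 : U) n (s : nat -> nat -> U) (j : nat -> nat) : nat -> U :=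
  fun i => if i < n then s i (j i) else u0.

Definition mono (U K : Type) (u0 : U) n k (c : (nat -> U) -> K) s col :=
  forall j : nat -> nat, (forall i, j i < k) -> c (pt u0 n s j) = col.

Definition box (U : Type) n k (X : nat -> U -> Prop) (s : nat -> nat -> U) :=
  forall i, i < n -> (forall j, j < k -> X i (s i j)) /\
    (forall j1 j2, j1 < k -> j2 < k -> s i j1 = s i j2 -> j1 = j2).

Definition dc (U : Type) (lt : U -> U -> Prop) (D : U -> Prop) :=
  forall x y, D x -> lt y x -> D y.

Lemma shrink (K U : Type) (lt : U -> U -> Prop) i (D : U -> Prop) :
  strict_wellorder (fun _ => True) lt -> dc lt D -> ~ card_le_succ i D K ->
  exists D', dc lt D' /\ (forall x, D' x -> D x) /\ ~ card_le_succ i D' K /\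
    (forall b, D' b -> card_le_succ i (fun y => lt y b) K).
Proof.
move=> wo dD nD; have [ir [tr [to mi]]] := wo.
case: (pselect (exists a, D a /\ ~ card_le_succ i (fun y => lt y a) K)) => [ex|nex].
  have [a [[Da na] ma]] := mi _ (fun _ _ => I) ex.
  exists (fun y => lt y a); split; [|split; [|split]] => //.
  - by move=> x y hx hy; apply: tr hy hx.
  - by move=> x hx; apply: dD Da hx.
  - move=> b hb; apply: contrapT => nb; apply: (ma b) => //; split => //.
    exact: dD Da hb.
exists D; split; [|split; [|split]] => // b Db.
by apply: contrapT => nb; apply: nex; exists b.
Qed.

Lemma lev_segs (K U : Type) (lt : U -> U -> Prop) n (W : U -> Prop) :
  strict_wellorder (fun _ => True) lt -> inhabited K ->
  (forall b, W b -> exists i, i < n /\ card_le_succ i (fun y => lt y b) K) ->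
  card_le_succ n W K.
Proof.
move=> wo iK hW; case: n hW => [|n] hW.
  by apply: lev_empty => // x /hW [i [] ].
exists lt; split; first exact: wo_restrict.
move=> b Wb; have [i [li Li]] := hW b Wb.
apply: (lev_sub (B := fun y => lt y b)); first by move=> x [].
exact: lev_le Li.
Qed.

Definition nrm (U : Type) (u0 : U) n k (s : nat -> nat -> U) : nat -> nat -> U :=
  fun i j => if (i < n) && (j < k) then s i j else u0.

Lemma Bmain (K U : Type) (u0 : U) (lt : U -> U -> Prop) k :
  bigK K -> strict_wellorder (fun _ => True) lt ->
  forall n (X : nat -> U -> Prop),
  (forall i, i < n -> dc lt (X i) /\ ~ card_le_succ i (X i) K) ->
  forall c : (nat -> U) -> K, exists s col, box n k X s /\ mono u0 n k c s col.
Proof.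
move=> hK wo; elim=> [|n IH] X hX c.
  exists (fun _ _ => u0), (c (fun _ => u0)); split => // j _.
have sh : forall i, exists D', i < n -> (dc lt D' /\ (forall x, D' x -> X i x) /\
    ~ card_le_succ i D' K /\ (forall b, D' b -> card_le_succ i (fun y => lt y b) K)).
  move=> i; case: (ltnP i n) => [lin|]; last by exists (X i).
  have [d1 d2] := hX i (ltnW lin).
  by have [D' HD] := shrink wo d1 d2; exists D' => _.
pose X' i := proj1_sig (cid (sh i)).
have hX' : forall i, i < n -> dc lt (X' i) /\ (forall x, X' i x -> X i x) /\
    ~ card_le_succ i (X' i) K /\ (forall b, X' i b -> card_le_succ i (fun y => lt y b) K).
  by move=> i; exact: (proj2_sig (cid (sh i))).
pose W u := exists i, i < n /\ X' i u.
have iK : inhabited K by case: hK => [_ [e _]]; exact: (inhabits (e 0)).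
have LW : card_le_succ n W K.
  apply: (lev_segs wo iK) => b [i [li Xb]]; exists i; split => //.
  by have [_ [_ [_ H]]] := hX' i li; apply: H.
have LBX := lev_FS hK (fun _ : nat => u0) n (lev_FS hK u0 k LW).
have LPB := lev_prod hK (ex_intro _ (fun x : K => x) (fun x y _ _ e => e)
   : exists fz : K -> K, injon (fun _ => True) fz) LBX.
pose cy y (p : nat -> U) := c (fun i => if i == n then y else p i).
have H : forall y, exists sc : (nat -> nat -> U) * K,
    box n k X' sc.1 /\ mono u0 n k (cy y) sc.1 sc.2.
  move=> y; have [s [col [b m]]] := IH X' (fun i li =>
    let: conj d (conj _ (conj nl _)) := hX' i li in conj d nl) (cy y).
  by exists (s, col).
pose F y := proj1_sig (cid (H y)).
have HF : forall y, box n k X' (F y).1 /\ mono u0 n k (cy y) (F y).1 (F y).2 :=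
  fun y => proj2_sig (cid (H y)).
pose G y := (nrm u0 n k (F y).1, (F y).2).
case: (pselect (exists v : (nat -> nat -> U) * K, kdistinct (fun y => X n y /\ G y = v) k)) => [ex|nex].
  have [v [g [gX gi]]] := ex.
  have Gv : forall j, j < k -> G (g j) = v by move=> j lj; case: (gX j lj).
  exists (fun i => if i == n then g else v.1 i), v.2; split.
    move=> i; rewrite ltnS leq_eqVlt => /orP[/eqP ->|li]; rewrite ?eqxx.
      by split => //; move=> j lj; case: (gX j lj).
    rewrite (ltn_eqF li).
    have key : forall j, j < k -> v.1 i j = (F (g 0)).1 i j.
      move=> j lj; have lk : 0 < k by apply: leq_ltn_trans lj.
      by rewrite -(Gv 0 lk) /= /nrm li lj.
    have [b1 b2] := (HF (g 0)).1 i li.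
    split.
      move=> j lj; rewrite key //.
      by have [_ [Xs _]] := hX' i li; apply: Xs; apply: b1.
    by move=> j1 j2 l1 l2; rewrite !key //; apply: b2.
  move=> j hj; set y := g (j n).
  have Gy : G y = v by apply: Gv.
  have := (HF y).2 j hj; rewrite -Gy /= /cy => <-.
  congr c; apply: funext => i; rewrite /pt /= /nrm.
  case: (eqVneq i n) => [->|nin]; first by rewrite ltnSn.
  rewrite ltnS leq_eqVlt (negbTE nin) /=.
  by case: (ltnP i n) => //= _; rewrite hj.
exfalso; apply: (hX n (ltnSn n)).2.
apply: (lev_fin2one (f := G) (k := k) hK _ _ LPB); last first.
  by move=> v kd; apply: nex; exists v.
move=> y Xy; split => //=; split => [i li|i ni]; last first.
  by apply: funext => j; rewrite /nrm ltnNge ni.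
split => [j lj|j kj]; last by rewrite /nrm li ltnNge kj.
rewrite /nrm li lj /=; exists i; split => //.
by have [b1 _] := (HF y).1 i li; apply: b1.
Qed.



Definition Fin (X : Type) (t : nat) (A : X -> Prop) :=
  exists f : X -> nat, (forall x, A x -> f x < t) /\ injon A f.

Lemma no_inj_ord t t' (f : nat -> nat) : t' < t ->
  (forall i, i < t -> f i < t') -> ~ (forall i j, i < t -> j < t -> f i = f j -> i = j).
Proof.
move=> lt fb fi.
pose g (i : 'I_t) : 'I_t' := Ordinal (fb i (ltn_ord i)).
have gi : injective g.
  by move=> i j [] /(fi _ _ (ltn_ord i) (ltn_ord j)) e; apply: val_inj.
by have := @leq_card _ _ g gi; rewrite !card_ord leqNgt lt.
Qed.

Lemma kd_Fin (X : Type) (A : X -> Prop) t t' : t' < t -> kdistinct A t -> ~ Fin t' A.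
Proof.
move=> lt [g [gA gi]] [f [fb fi]].
apply: (no_inj_ord (f := fun i => f (g i)) lt).
  by move=> i li; apply: fb; apply: gA.
by move=> i j li lj e; apply: gi => //; apply: fi => //; apply: gA.
Qed.

Lemma nkd_Fin (X : Type) (A : X -> Prop) t : ~ kdistinct A t -> Fin t A.
Proof. by move=> /fiber_small. Qed.

Lemma fin_pull (X Y : Type) (A : X -> Prop) (B : Y -> Prop) (f : X -> Y) t :
  (forall x, A x -> B (f x)) -> injon A f -> Fin t B -> Fin t A.
Proof.
move=> AB fi [g [gb gi]]; exists (fun x => g (f x)); split.
  by move=> x Ax; apply: gb; apply: AB.
by move=> x y Ax Ay e; apply: fi => //; apply: gi => //; apply: AB.
Qed.

Lemma pair_inj a b a' b' t : b < t -> b' < t -> a * t + b = a' * t + b' -> a = a' /\ b = b'.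
Proof.
move=> lb lb' e.
have t0 : 0 < t by apply: leq_ltn_trans lb.
have e1 := congr1 (fun n => n %/ t) e; have e2 := congr1 (fun n => n %% t) e.
move: e1 e2 => /=; rewrite !divnMDl // !divn_small // !addn0 => ->.
by rewrite !modnMDl !modn_small.
Qed.

Lemma fin_prod (X Z : Type) (A : X -> Prop) (B : Z -> Prop) a b :
  Fin a A -> Fin b B -> Fin (a * b) (fun p : X * Z => A p.1 /\ B p.2).
Proof.
move=> [f [fb fi]] [g [gb gi]]; exists (fun p => f p.1 * b + g p.2); split.
  move=> [x z] [Ax Bz] /=; have h1 := fb _ Ax; have h2 := gb _ Bz.
  apply: (@leq_trans (f x * b + b)); first by rewrite ltn_add2l.
  by rewrite -mulSnr leq_mul2r h1 orbT.
move=> [x z] [x' z'] [Ax Bz] [Ax' Bz'] /= e.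
have [e1 e2] := pair_inj (gb _ Bz) (gb _ Bz') e.
by move: (fi _ _ Ax Ax' e1) (gi _ _ Bz Bz' e2) => /= -> ->.
Qed.

Lemma fin_union (X : Type) (A B : X -> Prop) a b :
  Fin a A -> Fin b B -> Fin (a + b) (fun x => A x \/ B x).
Proof.
move=> [f [fb fi]] [g [gb gi]].
exists (fun x => if pselect (A x) then f x else a + g x); split.
  move=> x hx; case: pselect => [Ax|nA] /=.
    by have := fb _ Ax; lia.
  have Bx : B x by case: hx => // ?; case: nA.
  by have := gb _ Bx; lia.
move=> x y hx hy; case: pselect => [Ax|nAx]; case: pselect => [Ay|nAy] /=.
- by apply: fi.
- have By : B y by case: hy => // ?; case: nAy.
  by have := fb _ Ax; lia.
- have Bx : B x by case: hx => // ?; case: nAx.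
  by have := fb _ Ay; lia.
- have By : B y by case: hy => // ?; case: nAy.
  have Bx : B x by case: hx => // ?; case: nAx.
  by move=> e; apply: gi => //; lia.
Qed.

Fixpoint ncode (V : Type) (t : nat) (f : V -> nat) (i : nat) (g : nat -> V) : nat :=
  match i with
  | 0 => 0
  | i'.+1 => ncode t f i' g * t + f (g i')
  end.

Lemma ncode_spec (V : Type) (Y : V -> Prop) (f : V -> nat) t :
  (forall x, Y x -> f x < t) -> injon Y f -> forall i g g',
  (forall j, j < i -> Y (g j) /\ Y (g' j)) ->
  ncode t f i g < expn t i /\ (ncode t f i g = ncode t f i g' -> forall j, j < i -> g j = g' j).
Proof.
move=> fb fi; elim=> [|i IH] g g' Yg /=; first by split.
have [Y1 Y2] := Yg i (ltnSn _).
have [b1 i1] := IH g g' (fun j lj => Yg j (leqW lj)).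
split.
  have h1 := fb _ Y1.
  apply: (@leq_trans (ncode t f i g * t + t)); first by rewrite ltn_add2l.
  by rewrite -mulSnr expnSr leq_mul2r b1 orbT.
move=> e; have [e1 e2] := pair_inj (fb _ Y1) (fb _ Y2) e.
move=> j; rewrite ltnS leq_eqVlt => /orP[/eqP ->|lj]; first exact: fi.
exact: i1.
Qed.

Lemma fin_FS (V : Type) (v0 : V) k (Y : V -> Prop) t :
  Fin t Y -> Fin (expn t k) (FS v0 k Y).
Proof.
move=> [f [fb fi]]; exists (ncode t f k); split.
  move=> g [Fg _]; have := ncode_spec fb fi (g := g) (g' := g) (i := k).
  by case=> // j lj; split; apply: Fg.
move=> g g' Fg Fg' e; apply: (FS_eq Fg Fg').
have := ncode_spec fb fi (i := k) (g := g) (g' := g').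
case=> [j lj|_ H]; [by split; [apply: Fg.1|apply: Fg'.1]|exact: H].
Qed.

Lemma fin2one (X Y : Type) (A : X -> Prop) (B : Y -> Prop) (f : X -> Y) k t :
  (forall x, A x -> B (f x)) ->
  (forall y, ~ kdistinct (fun x => A x /\ f x = y) k) ->
  Fin t B -> Fin (t * k) A.
Proof.
move=> AB nd LB.
pose E := fun y => proj1_sig (cid (fiber_small (nd y))).
have Eb : forall x, A x -> E (f x) x < k.
  by move=> x Ax; rewrite /E; case: cid => e [eb _] /=; apply: eb.
have Ei : forall x y, A x -> A y -> f x = f y -> E (f x) x = E (f y) y -> x = y.
  move=> x y Ax Ay fe; rewrite -fe /E; case: cid => e [_ ei] /=.
  by apply: ei.
have Fk : Fin k (fun n => n < k) by exists (fun n : nat => n); split => // x y _ _.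
have LP := fin_prod LB Fk.
apply: (fin_pull (f := fun x => (f x, E (f x) x))) LP.
- by move=> x Ax; split => /=; [apply: AB|apply: Eb].
- by move=> x y Ax Ay [e1 e2]; apply: Ei.
Qed.

Fixpoint ssum (tt : nat -> nat) n := match n with 0 => 0 | n'.+1 => ssum tt n' + tt n' end.

Lemma fin_bigunion (X : Type) (tt : nat -> nat) n (Y : nat -> X -> Prop) :
  (forall i, i < n -> Fin (tt i) (Y i)) ->
  Fin (ssum tt n) (fun x => exists i, i < n /\ Y i x).
Proof.
elim: n => [|n IH] hY /=.
  by exists (fun _ => 0); split => [x [i []]|x y [i []]].
have := fin_union (IH (fun i li => hY i (leqW li))) (hY n (ltnSn _)).
apply: (fin_pull (f := fun x : X => x)) => [x [i [li Yi]]|x y _ _ //].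
rewrite ltnS leq_eqVlt in li; case/orP: li => [/eqP e|li]; first by right; rewrite -e.
by left; exists i.
Qed.

Fixpoint St (k m n : nat) : nat := match n with
  | 0 => 0
  | n'.+1 => St k m n' + (expn (expn (St k m n') k) n' * m * k).+1 end.
Definition tt k m n := (expn (expn (St k m n) k) n * m * k).+1.

Lemma St_ssum k m n : St k m n = ssum (tt k m) n.
Proof. by elim: n => [|n IH] //; rewrite /= -IH. Qed.

Lemma Bfin (K U : Type) (u0 : U) k m : Fin m (fun _ : K => True) ->
  forall n (X : nat -> U -> Prop),
  (forall i, i < n -> kdistinct (X i) (tt k m i)) ->
  forall c : (nat -> U) -> K, exists s col, box n k X s /\ mono u0 n k c s col.
Proof.
move=> FK; elim=> [|n IH] X hX c.
  by exists (fun _ _ => u0), (c (fun _ => u0)); split => // j _.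
have sh : forall i, exists Y : U -> Prop, i < n -> (kdistinct Y (tt k m i) /\
    (forall x, Y x -> X i x) /\ Fin (tt k m i) Y).
  move=> i; case: (ltnP i n) => [lin|]; last by exists (X i).
  have [g [gX gi]] := hX i (ltnW lin).
  exists (fun u => exists j, j < tt k m i /\ g j = u) => _; split; [|split].
  - by exists g; split => // j lj; exists j.
  - by move=> x [j [lj <-]]; apply: gX.
  - exists (fun u => match pselect (exists j, j < tt k m i /\ g j = u) with
        | left H => proj1_sig (cid H) | right _ => 0 end); split.
      move=> x hx; destruct (pselect _) as [H|nH] => //=.
      exact: (proj2_sig (cid H)).1.
    move=> x y hx hy; destruct (pselect (exists j, j < tt k m i /\ g j = x)) as [Hx|nHx];
      last by case: nHx.
    destruct (pselect (exists j, j < tt k m i /\ g j = y)) as [Hy|nHy]; last by case: nHy.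
    have h1 := (proj2_sig (cid Hx)).2; have h2 := (proj2_sig (cid Hy)).2.
    by move=> /= e; rewrite -h1 -h2 e.
pose X' i := proj1_sig (cid (sh i)).
have hX' : forall i, i < n -> kdistinct (X' i) (tt k m i) /\
    (forall x, X' i x -> X i x) /\ Fin (tt k m i) (X' i).
  by move=> i; exact: (proj2_sig (cid (sh i))).
pose W u := exists i, i < n /\ X' i u.
have LW : Fin (St k m n) W.
  by rewrite St_ssum; apply: fin_bigunion => i li; case: (hX' i li) => _ [].
have LBX := fin_FS (fun _ : nat => u0) n (fin_FS u0 k LW).
have LPB := fin_prod LBX FK.
pose cy y (p : nat -> U) := c (fun i => if i == n then y else p i).
have H : forall y, exists sc : (nat -> nat -> U) * K,
    box n k X' sc.1 /\ mono u0 n k (cy y) sc.1 sc.2.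
  move=> y; have [s [col [b mo]]] := IH X' (fun i li => (hX' i li).1) (cy y).
  by exists (s, col).
pose F y := proj1_sig (cid (H y)).
have HF : forall y, box n k X' (F y).1 /\ mono u0 n k (cy y) (F y).1 (F y).2 :=
  fun y => proj2_sig (cid (H y)).
pose G y := (nrm u0 n k (F y).1, (F y).2).
case: (pselect (exists v : (nat -> nat -> U) * K,
   kdistinct (fun y => X n y /\ G y = v) k)) => [ex|nex].
  have [v [g [gX gi]]] := ex.
  have Gv : forall j, j < k -> G (g j) = v by move=> j lj; case: (gX j lj).
  exists (fun i => if i == n then g else v.1 i), v.2; split.
    move=> i; rewrite ltnS leq_eqVlt => /orP[/eqP ->|li]; rewrite ?eqxx.
      by split => //; move=> j lj; case: (gX j lj).
    rewrite (ltn_eqF li).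
    have key : forall j, j < k -> v.1 i j = (F (g 0)).1 i j.
      move=> j lj; have lk : 0 < k by apply: leq_ltn_trans lj.
      by rewrite -(Gv 0 lk) /= /nrm li lj.
    have [b1 b2] := (HF (g 0)).1 i li.
    split.
      move=> j lj; rewrite key //.
      by have [_ [Xs _]] := hX' i li; apply: Xs; apply: b1.
    by move=> j1 j2 l1 l2; rewrite !key //; apply: b2.
  move=> j hj; set y := g (j n).
  have Gy : G y = v by apply: Gv.
  have := (HF y).2 j hj; rewrite -Gy /= /cy => <-.
  congr c; apply: funext => i; rewrite /pt /= /nrm.
  case: (eqVneq i n) => [->|nin]; first by rewrite ltnSn.
  rewrite ltnS leq_eqVlt (negbTE nin) /=.
  by case: (ltnP i n) => //= _; rewrite hj.
exfalso.
have FX : Fin (expn (expn (St k m n) k) n * m * k) (X n).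
  apply: (fin2one (f := G) (k := k) _ _ LPB); last first.
    by move=> v kd; apply: nex; exists v.
  move=> y Xy; split => //=; split => [i li|i ni]; last first.
    by apply: funext => j; rewrite /nrm ltnNge ni.
  split => [j lj|j kj]; last by rewrite /nrm li ltnNge kj.
  rewrite /nrm li lj /=; exists i; split => //.
  by have [b1 _] := (HF y).1 i li; apply: b1.
exact: (kd_Fin (ltnSn _) (hX n (ltnSn n)) FX).
Qed.



Lemma zorn_sets (T : Type) (P : (T -> Prop) -> Prop) :
  (forall F : (T -> Prop) -> Prop, (forall X, F X -> P X) ->
    (forall X Y, F X -> F Y -> (forall t, X t -> Y t) \/ (forall t, Y t -> X t)) ->
    P (fun t => exists X, F X /\ X t)) ->
  exists M, P M /\ forall B, (forall t, M t -> B t) -> ~ (forall t, B t -> M t) -> ~ P B.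
Proof.
move=> hch.
have [F FP Ftot|M [PM Mmax]] := @classical_sets.Zorn_bigcup T P.
  have -> : classical_sets.bigcup F (fun X => X) = (fun t => exists X, F X /\ X t).
    by apply: funext => t; apply: propext; split => [[X FX Xt]|[X [FX Xt]]]; exists X.
  apply: hch => // X Y FX FY; exact: Ftot.
exists M; split => // B MB nBM PB; apply: (Mmax B) => //; split => //.
Qed.

Definition choosef (X Y : Type) (y0 : Y) (R : X -> Y -> Prop) (x : X) : Y :=
  match pselect (exists y, R x y) with
  | left H => proj1_sig (cid H)
  | right _ => y0
  end.

Lemma choosefP (X Y : Type) (y0 : Y) (R : X -> Y -> Prop) x :
  (exists y, R x y) -> R x (choosef y0 R x).
Proof.
move=> H; rewrite /choosef; destruct (pselect _) as [H'|nH] => /=; last by case: nH.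
exact: (proj2_sig (cid H')).
Qed.

Lemma compar (X Y : Type) (A : X -> Prop) (B : Y -> Prop) (x0 : X) (y0 : Y) :
  (exists f : X -> Y, (forall x, A x -> B (f x)) /\ injon A f) \/
  (exists g : Y -> X, (forall y, B y -> A (g y)) /\ injon B g).
Proof.
pose PI (R : X * Y -> Prop) := (forall p, R p -> A p.1 /\ B p.2) /\
  (forall p q, R p -> R q -> p.1 = q.1 -> p.2 = q.2) /\
  (forall p q, R p -> R q -> p.2 = q.2 -> p.1 = q.1).
have [F FP Ftot|M [[MAB [Mf Mi]] Mmax]] := @zorn_sets _ PI.
  split; [|split].
  - by move=> p [R [FR Rp]]; case: (FP R FR) => H _; apply: H.
  - move=> p q [R1 [F1 p1]] [R2 [F2 q2]].
    case: (Ftot _ _ F1 F2) => s.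
      by case: (FP R2 F2) => _ [H _]; apply: H => //; apply: s.
    by case: (FP R1 F1) => _ [H _]; apply: H => //; apply: s.
  - move=> p q [R1 [F1 p1]] [R2 [F2 q2]].
    case: (Ftot _ _ F1 F2) => s.
      by case: (FP R2 F2) => _ [_ H]; apply: H => //; apply: s.
    by case: (FP R1 F1) => _ [_ H]; apply: H => //; apply: s.
case: (pselect (forall a, A a -> exists b, M (a, b))) => [allA|nA].
  left; exists (choosef y0 (fun a b => M (a, b))); split.
    by move=> x Ax; have := MAB _ (choosefP y0 (R := fun a b => M (a, b)) (allA x Ax)); case.
  move=> x y Ax Ay e.
  have h1 := choosefP y0 (R := fun a b => M (a, b)) (allA x Ax); have h2 := choosefP y0 (R := fun a b => M (a, b)) (allA y Ay).
  by have := Mi _ _ h1 h2 e.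
case: (pselect (forall b, B b -> exists a, M (a, b))) => [allB|nB].
  right; exists (choosef x0 (fun b a => M (a, b))); split.
    by move=> y By; have := MAB _ (choosefP x0 (R := fun b a => M (a, b)) (allB y By)); case.
  move=> x y Bx By e.
  have h1 := choosefP x0 (R := fun b a => M (a, b)) (allB x Bx); have h2 := choosefP x0 (R := fun b a => M (a, b)) (allB y By).
  by have := Mf _ _ h1 h2 e.
have [a [Aa na]] : exists a, A a /\ ~ exists b, M (a, b).
  apply: contrapT => H; apply: nA => a Aa; apply: contrapT => nb.
  by apply: H; exists a.
have [b [Bb nb]] : exists b, B b /\ ~ exists a, M (a, b).
  apply: contrapT => H; apply: nB => b Bb; apply: contrapT => na'.
  by apply: H; exists b.
exfalso; apply: (Mmax (fun p => M p \/ p = (a, b))).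
- by move=> t Mt; left.
- by move=> H; apply: na; exists b; apply: H; right.
split; [|split].
- by move=> p [/MAB //|->].
- move=> [p1 p2] [q1 q2] [Mp|[-> ->]] [Mq|[-> ->]] //= e.
  + exact: (Mf _ _ Mp Mq e).
  + by case: na; exists p2; rewrite -e.
  + by case: na; exists q2; rewrite e.
- move=> [p1 p2] [q1 q2] [Mp|[-> ->]] [Mq|[-> ->]] //= e.
  + exact: (Mi _ _ Mp Mq e).
  + by case: nb; exists p1; rewrite -e.
  + by case: nb; exists q1; rewrite e.
Qed.

Definition supG (K : Type) (G : (K * K) * K -> Prop) (x : K) :=
  exists t, G t /\ (t.1.1 = x \/ t.1.2 = x \/ t.2 = x).

Definition PG (K : Type) (G : (K * K) * K -> Prop) :=
  (forall t u, G t -> G u -> t.1 = u.1 -> t.2 = u.2) /\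
  (forall t u, G t -> G u -> t.2 = u.2 -> t.1 = u.1) /\
  (forall x y, supG G x -> supG G y -> exists z, G ((x, y), z)).

Lemma PG_chain (K : Type) (Hs : ((K * K) * K -> Prop) -> Prop) :
  (forall H, Hs H -> PG H) ->
  (forall X Y, Hs X -> Hs Y -> (forall t, X t -> Y t) \/ (forall t, Y t -> X t)) ->
  PG (fun t => exists H, Hs H /\ H t).
Proof.
move=> HP Htot; split; [|split].
- move=> t u [H1 [h1 t1]] [H2 [h2 u2]].
  case: (Htot _ _ h1 h2) => s.
    by case: (HP _ h2) => P1 _; apply: P1 => //; apply: s.
  by case: (HP _ h1) => P1 _; apply: P1 => //; apply: s.
- move=> t u [H1 [h1 t1]] [H2 [h2 u2]].
  case: (Htot _ _ h1 h2) => s.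
    by case: (HP _ h2) => _ [P1 _]; apply: P1 => //; apply: s.
  by case: (HP _ h1) => _ [P1 _]; apply: P1 => //; apply: s.
- move=> x y [t [[H1 [h1 t1]] cx]] [u [[H2 [h2 u2]] cy]].
  case: (Htot _ _ h1 h2) => s.
    case: (HP _ h2) => _ [_ P3].
    have [z Hz] : exists z, H2 ((x, y), z).
      by apply: P3; [exists t; split => //; apply: s|exists u].
    by exists z, H2.
  case: (HP _ h1) => _ [_ P3].
  have [z Hz] : exists z, H1 ((x, y), z).
    by apply: P3; [exists t|exists u; split => //; apply: s].
  by exists z, H1.
Qed.

Lemma hessenberg (K : Type) (e : nat -> K) : injective e ->
  exists h : K * K -> K, injective h.
Proof.
move=> ei.
pose pk : nat * nat -> nat := pickle.
have pki : injective pk by apply: (pcan_inj pickleK).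
pose G0 (t : (K * K) * K) := exists i j, t = ((e i, e j), e (pk (i, j))).
have supG0 : forall x, supG G0 x -> exists i, x = e i.
  move=> x [t [[i [j ->]] /= [<-|[<-|<-]]]]; by eexists.
have PG0 : PG G0.
  split; [|split].
  - move=> t u [i [j ->]] [i' [j' ->]] /= [/ei -> /ei ->] //.
  - move=> t u [i [j ->]] [i' [j' ->]] /= /ei /pki [-> ->] //.
  - move=> x y /supG0 [i ->] /supG0 [j ->].
    by exists (e (pk (i, j))), i, j.
pose P' (G : (K * K) * K -> Prop) := PG (fun t => G t \/ G0 t).
have [F FP Ftot|M [PM Mmax]] := @zorn_sets _ P'.
  pose Hs H := H = G0 \/ exists G, F G /\ H = (fun t => G t \/ G0 t).
  change (PG (fun t => (exists X, F X /\ X t) \/ G0 t)).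
  have -> : (fun t => (exists X, F X /\ X t) \/ G0 t) = (fun t => exists H, Hs H /\ H t).
    apply: funext => t; apply: propext; split.
      case=> [[X [FX Xt]]|G0t]; last by exists G0; split => //; left.
      by exists (fun t => X t \/ G0 t); split; [right; exists X|left].
    move=> [H [[->|[G [FG ->]]] Ht]]; first by right.
    by case: Ht => [Gt|G0t]; [left; exists G|right].
  apply: PG_chain.
    by move=> H [->|[G [FG ->]]] //; apply: FP.
  move=> X Y [->|[G1 [F1 ->]]] [->|[G2 [F2 ->]]].
  - by left.
  - by left => t; right.
  - by right => t; right.
  - case: (Ftot _ _ F1 F2) => s; [left|right] => t [/s|]; by [left|right].
pose G t := M t \/ G0 t.
have [Gf [Gi Gc]] : PG G := PM.
pose S := supG G.
have Se : forall i, S (e i).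
  by move=> i; exists ((e i, e i), e (pk (i, i))); split; [right; exists i, i|left].
pose Fn := fun p : K * K => choosef (e 0) (fun p z => G (p, z)) p.
have FnP : forall x y, S x -> S y -> G ((x, y), Fn (x, y)).
  move=> x y Sx Sy; exact: (choosefP (e 0) (R := fun p z => G (p, z)) (Gc _ _ Sx Sy)).
have FnS : forall x y, S x -> S y -> S (Fn (x, y)).
  by move=> x y Sx Sy; exists ((x, y), Fn (x, y)); split; [apply: FnP|right; right].
have Fni : forall x y x' y', S x -> S y -> S x' -> S y' -> Fn (x, y) = Fn (x', y') ->
    x = x' /\ y = y'.
  move=> x y x' y' Sx Sy Sx' Sy' eq.
  by have [] := Gi _ _ (FnP _ _ Sx Sy) (FnP _ _ Sx' Sy') eq.
have e01 : e 0 <> e 1 by move/ei.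
case: (compar S (fun x => ~ S x) (e 0) (e 0)) => [[f [fC fi]]|[q [qS qi]]]; last first.
  pose j x := if pselect (S x) then Fn (x, e 0) else Fn (q x, e 1).
  have jS : forall x, S (j x).
    move=> x; rewrite /j; case: pselect => Sx /=; apply: FnS => //; exact: qS.
  have ji : injective j.
    move=> x y; rewrite /j; case: pselect => Sx; case: pselect => Sy /= eq.
    - by case: (Fni _ _ _ _ Sx (Se 0) Sy (Se 0) eq).
    - by case: (Fni _ _ _ _ Sx (Se 0) (qS _ Sy) (Se 1) eq).
    - by case: (Fni _ _ _ _ (qS _ Sx) (Se 1) Sy (Se 0) eq) => _ /esym.
    - by case: (Fni _ _ _ _ (qS _ Sx) (Se 1) (qS _ Sy) (Se 1) eq) => /(qi _ _ Sx Sy).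
  exists (fun p => Fn (j p.1, j p.2)) => [[x y] [x' y']] /= eq.
  by case: (Fni _ _ _ _ (jS x) (jS y) (jS x') (jS y') eq) => /ji -> /ji ->.
exfalso.
pose T x := exists s, S s /\ f s = x.
have TnS : forall x, T x -> ~ S x by move=> x [s [Ss <-]]; apply: fC.
pose finv x := choosef (e 0) (fun x s => S s /\ f s = x) x.
have finvP : forall x, T x -> S (finv x) /\ f (finv x) = x.
  by move=> x Tx; exact: (choosefP (e 0) (R := fun x s => S s /\ f s = x) Tx).
pose r x := if pselect (S x) then x else finv x.
have rS : forall x, S x \/ T x -> S (r x).
  by move=> x hx; rewrite /r; case: pselect => Sx //=; case: hx => // /finvP [].
have rT : forall x, T x -> f (r x) = x.
  by move=> x Tx; rewrite /r; case: pselect => Sx /=; [case: (TnS _ Tx)|case: (finvP _ Tx)].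
have rSx : forall x, S x -> r x = x by move=> x Sx; rewrite /r; case: pselect.
pose tag x y := if pselect (S x) then 1 else if pselect (S y) then 0 else 2.
pose code x y := Fn (Fn (r x, r y), e (tag x y)).
have codeS : forall x y, S x \/ T x -> S y \/ T y -> S (code x y).
  by move=> x y hx hy; apply: (FnS _ _); [apply: (FnS _ _); apply: (rS _)|apply: (Se _)].
have codei : forall x y x' y', S x \/ T x -> S y \/ T y -> S x' \/ T x' -> S y' \/ T y' ->
    ~ (S x /\ S y) -> ~ (S x' /\ S y') -> code x y = code x' y' -> x = x' /\ y = y'.
  move=> x y x' y' hx hy hx' hy' nxy nxy' eq.
  have [e1 e2] := Fni _ _ _ _ (FnS _ _ (rS _ hx) (rS _ hy)) (Se _)
    (FnS _ _ (rS _ hx') (rS _ hy')) (Se _) eq.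
  have [rx ry] := Fni _ _ _ _ (rS _ hx) (rS _ hy) (rS _ hx') (rS _ hy') e1.
  have et := ei _ _ e2.
  have same : forall u u', S u \/ T u -> S u' \/ T u' -> (S u <-> S u') -> r u = r u' -> u = u'.
    move=> u u' hu hu' [su su'] ru; case: (pselect (S u)) => Su.
      by rewrite -(rSx _ Su) -(rSx _ (su Su)).
    have Tu : T u by case: hu.
    have Tu' : T u' by case: hu' => // /su' /Su.
    by rewrite -(rT _ Tu) -(rT _ Tu') ru.
  move: et; rewrite /tag.
  case: pselect => Sx; case: pselect => Sx'; case: pselect => Sy; case: pselect => Sy' //= _;
    try (by case: nxy); try (by case: nxy');
    by split; apply: same.
pose New (t : (K * K) * K) := (S t.1.1 \/ T t.1.1) /\ (S t.1.2 \/ T t.1.2) /\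
  ~ (S t.1.1 /\ S t.1.2) /\ t.2 = f (code t.1.1 t.1.2).
pose Bg t := G t \/ New t.
have supGS : forall t, G t -> S t.1.1 /\ S t.1.2 /\ S t.2.
  by move=> t Gt; split; [|split]; exists t; split => //; [left|right; left|right; right].
have supB : forall x, supG Bg x -> S x \/ T x.
  move=> x [t [[Gt|[h1 [h2 [h3 h4]]]] hx]].
    by left; have [s1 [s2 s3]] := supGS _ Gt; case: hx => [<-|[<-|<-]].
  case: hx => [<-|[<-|<-]] //; right; rewrite h4.
  by exists (code t.1.1 t.1.2); split => //; apply: codeS.
have PB : PG Bg.
  split; [|split].
  - move=> t u [Gt|Nt] [Gu|Nu] e1.
    + exact: Gf.
    + have [s1 [s2 _]] := supGS _ Gt; case: Nu => _ [_ [nn _]].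
      by case: nn; rewrite -e1.
    + have [s1 [s2 _]] := supGS _ Gu; case: Nt => _ [_ [nn _]].
      by case: nn; rewrite e1.
    + by case: Nt => _ [_ [_ ->]]; case: Nu => _ [_ [_ ->]]; rewrite e1.
  - move=> t u [Gt|Nt] [Gu|Nu] e1.
    + exact: Gi.
    + have [_ [_ s3]] := supGS _ Gt; case: Nu => h1 [h2 [_ h4]].
      by case: (fC _ (codeS _ _ h1 h2)); rewrite -h4 -e1.
    + have [_ [_ s3]] := supGS _ Gu; case: Nt => h1 [h2 [_ h4]].
      by case: (fC _ (codeS _ _ h1 h2)); rewrite -h4 e1.
    + case: Nt => h1 [h2 [h3 h4]]; case: Nu => h1' [h2' [h3' h4']].
      move: e1; rewrite h4 h4' => /(fi _ _ (codeS _ _ h1 h2) (codeS _ _ h1' h2')).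
      move=> /(codei _ _ _ _ h1 h2 h1' h2' h3 h3') [].
      by case: t {h1 h2 h3 h4} => [[? ?] ?]; case: u {h1' h2' h3' h4'} => [[? ?] ?] /= -> ->.
  - move=> x y /supB hx /supB hy.
    case: (pselect (S x /\ S y)) => [[Sx Sy]|nxy].
      by have [z Gz] := Gc _ _ Sx Sy; exists z; left.
    by exists (f (code x y)); right.
apply: (Mmax Bg).
- by move=> t Mt; left; left.
- move=> BM.
  have Tf : T (f (e 0)) by exists (e 0).
  have Nt : New ((f (e 0), f (e 0)), f (code (f (e 0)) (f (e 0)))).
    by split; [right|split; [right|split => //= [[/(TnS _ Tf)]]]].
  have := BM _ (or_intror Nt) => Mt.
  by have [s1 _] := supGS _ (or_introl Mt); case: (TnS _ Tf).
change (PG (fun t => Bg t \/ G0 t)).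
have -> : (fun t => Bg t \/ G0 t) = Bg.
  by apply: funext => t; apply: propext; split => [[//|?]|?]; [left; right|left].
exact: PB.
Qed.



Lemma fin_or_inf (K : Type) (k0 : K) :
  (exists m, Fin m (fun _ : K => True)) \/ (exists e : nat -> K, injective e).
Proof.
case: (pselect (exists m, Fin m (fun _ : K => True))) => [//|nF]; [by left|right].
have ext : forall l : seq {classic K}, exists x : {classic K}, x \notin l.
  move=> l; apply: contrapT => H; apply: nF; exists (size l).
  have inl : forall x : {classic K}, x \in l.
    by move=> x; apply: contrapT => nx; apply: H; exists x; apply/negP.
  exists (fun x => index (x : {classic K}) l); split.
    by move=> x _; rewrite index_mem.
  move=> x y _ _ e.
  by rewrite -(nth_index (k0 : {classic K}) (inl x)) -(nth_index (k0 : {classic K}) (inl y)) e.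
pose new l := proj1_sig (cid (ext l)).
have newP : forall l, new l \notin l by move=> l; exact: (proj2_sig (cid (ext l))).
pose fix el n := match n with 0 => [::] | n'.+1 => new (el n') :: el n' end.
exists (fun n => new (el n)).
have inel : forall i j, i < j -> new (el i) \in el j.
  move=> i0; elim=> [//|j IH]; rewrite ltnS leq_eqVlt => /orP[/eqP ->|lj].
    by rewrite /= mem_head.
  by rewrite /= in_cons (IH lj) orbT.
move=> i j e; case: (ltngtP i j) => [lij|lji|//].
  by have := newP (el j); rewrite -e inel.
by have := newP (el i); rewrite e inel.
Qed.

Lemma box_false (d k : nat) (T K : Type) (P : ('I_d -> T) -> Prop)
  (c : ('I_d -> R) -> K) (u0 : R) s col :
  template k P -> proper_coloring k P c ->
  box d k (fun _ _ => True) s ->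
  mono u0 d k (fun p : nat -> R => c (fun i : 'I_d => p i)) s col -> False.
Proof.
move=> [g [gi gP]] pc bx mo.
pose idxv (i : 'I_d) (v : T) : nat :=
  match pselect (exists j : 'I_k, g j i = v) with
  | left H => val (proj1_sig (cid H)) | right _ => 0 end.
have idxvP : forall i v, (exists j : 'I_k, g j i = v) ->
    exists j : 'I_k, val j = idxv i v /\ g j i = v.
  move=> i v H; rewrite /idxv; destruct (pselect _) as [H'|nH] => //=.
  by exists (proj1_sig (cid H')); split => //; exact: (proj2_sig (cid H')).
have Pg : forall x, P x -> exists j, g j = x by move=> x /gP.
pose f (x : 'I_d -> T) : 'I_d -> R := fun i => s i (idxv i (x i)).
pose Q y := exists x, P x /\ f x = y.
have colQ : forall z, Q z -> c z = col.
  move=> z [x [Px <-]]; have [j0 xj0] := Pg x Px.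
  pose jj (n : nat) : nat := match pselect (n < d) with
    | left H => idxv (Ordinal H) (x (Ordinal H)) | right _ => 0 end.
  have jjk : forall n, jj n < k.
    move=> n; rewrite /jj; destruct (pselect (n < d)) as [H|nH] => //=.
      have ex0 : exists j : 'I_k, g j (Ordinal H) = x (Ordinal H) by exists j0; rewrite xj0.
      have [j [<- _]] := idxvP (Ordinal H) (x (Ordinal H)) ex0.
      exact: ltn_ord.
    exact: leq_ltn_trans (leq0n _) (ltn_ord j0).
  rewrite -(mo jj jjk); congr c; apply: funext => i; rewrite /pt ltn_ord /f /jj.
  destruct (pselect (i < d)) as [H|nH]; last by case: nH; apply: ltn_ord.
  by have -> : Ordinal H = i by apply: val_inj.
have edge : L_edge k P Q.
  split.
    exists (fun j => f (g j)); split.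
      move=> j1 j2 e; apply: gi; apply: funext => i.
      have := congr1 (fun h => h i) e; rewrite /f => es.
      have [a1 [ea1 ga1]] := idxvP i (g j1 i) (ex_intro _ j1 erefl).
      have [a2 [ea2 ga2]] := idxvP i (g j2 i) (ex_intro _ j2 erefl).
      have [_ binj] := bx i (ltn_ord i).
      have := binj _ _ _ _ es; rewrite -ea1 -ea2 => /(_ (ltn_ord _) (ltn_ord _)) /val_inj ea.
      by rewrite -ga1 -ga2 ea.
    move=> y; split.
      by move=> [x [Px <-]]; have [j <-] := Pg x Px; exists j.
    by move=> [j <-]; exists (g j); split => //; apply/gP; exists j.
  exists f; split; [|split].
  - by move=> x Px; exists x.
  - by move=> y [x [Px <-]]; exists x.
  - by move=> x y _ _ i e; rewrite /f e.
have [x [y [Qx [Qy ne]]]] := pc Q edge.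
by apply: ne; rewrite (colQ _ Qx) (colQ _ Qy).
Qed.

Module Tern.
From Coquelicot Require Import Coquelicot.
From Stdlib Require Import Lra.


Definition tern (b : nat -> bool) (n : nat) : R := if b n then (/3)^n else 0.
Definition xb (b : nat -> bool) : R := Series (tern b).

Lemma tern_bnd b n : 0 <= tern b n <= (/3)^n.
Proof.
rewrite /tern; case: (b n); split; try apply: Rle_refl.
- by apply: pow_le; lra.
- by apply: pow_le; lra.
Qed.

Lemma geom3 : Rabs (/3) < 1.
Proof. rewrite Rabs_pos_eq; lra. Qed.

Lemma ex_tern b : ex_series (tern b).
Proof.
apply: (ex_series_le _ (fun n => (/3)^n)).
  move=> n; rewrite /norm /= /abs /= Rabs_pos_eq; case: (tern_bnd b n) => //.
exists (/ (1 - /3)); exact: is_series_geom geom3.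
Qed.

Lemma xb_bnd b : 0 <= xb b <= 3/2.
Proof.
split.
  have Z : Series (fun _ : nat => 0) = 0.
    rewrite (Series_ext (fun _ => 0) (fun n => 0 * tern b n)); last by move=> n; ring.
    by rewrite Series_scal_l; ring.
  rewrite /xb -Z.
  by apply: Series_le => [n|]; [split; [apply: Rle_refl|case: (tern_bnd b n)]|apply: ex_tern].
apply: (Rle_trans _ (Series (fun n => (/3)^n))).
  apply: Series_le => [n|]; first exact: tern_bnd.
  by exists (/ (1 - /3)); exact: is_series_geom geom3.
rewrite Series_geom; [lra|exact: geom3].
Qed.

Lemma xb_shift b : xb b = (if b 0%nat then 1 else 0) + /3 * xb (fun n => b n.+1).
Proof.
rewrite /xb Series_incr_1; last exact: ex_tern.
rewrite -Series_scal_l; congr (_ + _).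
apply: Series_ext => n; rewrite /tern; case: (b n.+1) => /=; lra.
Qed.

Lemma xb_neq (n : nat) : forall b b' : nat -> bool, b n <> b' n -> (forall i : nat, ltn i n -> b i = b' i) -> xb b <> xb b'.
Proof.
elim: n => [|n IH] b b' hn hlt.
  rewrite (xb_shift b) (xb_shift b').
  have := xb_bnd (fun n => b n.+1); have := xb_bnd (fun n => b' n.+1).
  by case: (b 0%nat) hn; case: (b' 0%nat) => // _; lra.
rewrite (xb_shift b) (xb_shift b') (hlt 0%nat) //.
have := IH (fun i => b i.+1) (fun i => b' i.+1) hn (fun i li => hlt i.+1 li).
lra.
Qed.

Lemma xb_inj : injective xb.
Proof.
move=> b b' e; apply: funext => n; apply: contrapT => nn.
have ex : exists n, b n != b' n by exists n; apply/eqP.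
have := ex_minnP ex => -[m /eqP hm mmin].
apply: (xb_neq hm _ e) => i li; apply/eqP; apply: contraTT li => hi.
by rewrite -leqNgt; apply: mmin.
Qed.

End Tern.

Theorem corollary1p3 (d k : nat) (T : Type) (P : ('I_d -> T) -> Prop)
  (K : Type) :
  1 <= d -> 2 <= k -> template k P -> is_chromatic_number k P K ->
  card_le_succ (d - 1) (fun _ : nat -> bool => True) K.
Proof.
move=> d1 k2 tP [[c pc] _].
pose c' (p : nat -> R) := c (fun i : 'I_d => p i).
have k0 : K := c (fun _ => 0%R).
case: (fin_or_inf k0) => [[m FK]|[e ei]].
  exfalso.
  have hX : forall i, i < d -> kdistinct (fun _ : R => True) (tt k m i).
    move=> i _; exists INR; split => // a b _ _; exact: INR_eq.
  have [s [col [bx mo]]] := Bfin 0%R FK hX c'.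
  exact: (box_false tP pc bx mo).
have hK : bigK K := conj (hessenberg ei) (ex_intro _ e ei).
have [lt wo] := wo_exists R.
case: (pselect (exists i, i < d /\ card_le_succ i (fun _ : R => True) K)) => [[i [li Li]]|nL].
  have Ld : card_le_succ (d - 1) (fun _ : R => True) K.
    by apply: (lev_le _ Li); rewrite leq_subRL // addnC.
  apply: (lev_pull (f := Tern.xb)) Ld => // x y _ _; exact: Tern.xb_inj.
exfalso.
have hX : forall i, i < d -> dc lt (fun _ : R => True) /\ ~ card_le_succ i (fun _ : R => True) K.
  by move=> i li; split => // Li; apply: nL; exists i.
have [s [col [bx mo]]] := Bmain 0%R k hK wo hX c'.
exact: (box_false tP pc bx mo).
Qed.
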